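(* Let $\Gamma$ be an admissible parabolic graph (for a fixed $D\ge2$), let $d$ be the degree of a parabolic component of $\Gamma$, and let $\Sigma$ be an elliptic (i.e. non-affine Dynkin) component of $\Gamma$. Then $d\notin\operatorname{ds}\Sigma$. If $\Gamma$ is saturated, then also $d-1\notin\operatorname{ds}\Sigma$.
   Context: Graphs are finite, simple. $\mathbb{Z}\Gamma$ is the lattice freely generated by the vertices with $v^2=-2$, $u\cdot v=1$ if adjacent, $0$ otherwise. $\mathcal{F}_h(\Gamma)=(\mathbb{Z}\Gamma\oplus\mathbb{Z}h)/\ker$, with $h^2=2D$ and $v\cdot h=1$ for all vertices. $\Gamma$ is parabolic if $\mathbb{Z}\Gamma\otimes\mathbb{R}$ is negative semidefinite and degenerate; its components are simply laced Dynkin diagrams (elliptic components) and affine Dynkin diagrams (parabolic components, at least one). For an affine Dynkin diagram $\Sigma'$ with $\ker\mathbb{Z}\Sigma'$ generated by $k_{\Sigma'}=\sum n_vv$, $n_v>0$, its degree is $\sum n_v$. For a Dynkin diagram $\Sigma$, the degree set $\operatorname{ds}\Sigma$ is the set of coefficient sums $\sum m_v$ of all positive roots $\sum m_vv\in\mathbb{Z}\Sigma$ (e.g. $\operatorname{ds}\mathbf A_p=\{1,\dots,p\}$, $\operatorname{ds}\mathbf D_q=\{1,\dots,2q-3\}$, $\operatorname{ds}\mathbf E_6=\{1,\dots,11\}$, $\operatorname{ds}\mathbf E_7=\{1,\dots,13,17\}$, $\operatorname{ds}\mathbf E_8=\{1,\dots,16,23\}$). A $2D$-polarized lattice $(S,h)$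 is admissible if it has no $e$ with $e^2=-2$, $e\cdot h=0$, nor $e$ with $e^2=0$, $e\cdot h=2$; $\Gamma$ is admissible if $\mathcal{F}_h(\Gamma)$ is (in particular it has positive inertia index $1$). For a polarized lattice, its set of lines is $\{v: v^2=-2, v\cdot h=1\}$, viewed as a graph with $u,v$ adjacent iff $u\cdot v=1$; $\Gamma$ is saturated if $\Gamma$ equals the set of lines of $\mathcal{F}_h(\Gamma)$. *)

(* Defs.v *)
From mathcomp Require Import all_boot all_order all_algebra.
Set Implicit Arguments. Unset Strict Implicit. Unset Printing Implicit Defensive.
Import Order.TTheory GRing.Theory Num.Theory.
Local Open Scope ring_scope.

(* A finite simple graph is a symmetric irreflexive relation e on a finType T
   (vertices).  Elements of ZΓ ⊕ Zh are represented as pairs (x, a) with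
   x : T -> int the coefficients on the vertices and a the coefficient of h. *)

Definition lvec (T : finType) := ((T -> int) * int)%type.

Definition gram (T : finType) (e : rel T) (u v : T) : int :=
  if u == v then -2 else if e u v then 1 else 0.

Definition zform (T : finType) (e : rel T) (x y : T -> int) : int :=
  \sum_(u : T) \sum_(v : T) x u * y v * gram e u v.

(* The form on ZΓ ⊕ Zh, with h^2 = 2D and v.h = 1 for all vertices v. *)
Definition bform (D : nat) (T : finType) (e : rel T) (w1 w2 : lvec T) : int :=
  zform e w1.1 w2.1 + w1.2 * (\sum_(v : T) w2.1 v)
  + w2.2 * (\sum_(u : T) w1.1 u) + w1.2 * w2.2 * (2 * D)%:R.

Definition hvec (T : finType) : lvec T := (fun _ => 0, 1).
Definition vertex (T : finType) (v : T) : lvec T := (fun u => (u == v)%:R, 0).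
Definition lsub (T : finType) (w1 w2 : lvec T) : lvec T :=
  (fun u => w1.1 u - w2.1 u, w1.2 - w2.2).

(* Two representatives define the same element of
   F_h(Γ) = (ZΓ ⊕ Zh)/ker  iff their difference is in the kernel. *)
Definition feq (D : nat) (T : finType) (e : rel T) (w1 w2 : lvec T) : Prop :=
  forall w, bform D e (lsub w1 w2) w = 0.

(* positive inertia index of F_h(Γ) equals 1: some positive vector, and no
   positive definite rank-2 sublattice. *)
Definition pos_inertia_one (D : nat) (T : finType) (e : rel T) : Prop :=
  (exists w, 0 < bform D e w w) /\
  (forall w1 w2 : lvec T, ~ [/\ 0 < bform D e w1 w1, 0 < bform D e w2 w2 &
        bform D e w1 w2 ^+ 2 < bform D e w1 w1 * bform D e w2 w2]).

Definition admissible (D : nat) (T : finType) (e : rel T) : Prop :=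
  [/\ pos_inertia_one D e,
      (forall w : lvec T, ~ (bform D e w w = -2 /\ bform D e w (hvec T) = 0))
    & (forall w : lvec T, ~ (bform D e w w = 0 /\ bform D e w (hvec T) = 2))].

Definition nonzero (T : finType) (x : T -> int) : Prop := exists v, x v != 0.

Definition parabolic (T : finType) (e : rel T) : Prop :=
  (forall x : T -> int, zform e x x <= 0) /\
  (exists x : T -> int, nonzero x /\ forall y, zform e x y = 0).

Definition supported (T : finType) (C : {set T}) (x : T -> int) : Prop :=
  forall u, u \notin C -> x u = 0.

Definition component (T : finType) (e : rel T) (C : {set T}) : Prop :=
  exists v, C = [set u | connect e v u].

Definition elliptic_component (T : finType) (e : rel T) (C : {set T}) : Prop :=
  component e C /\
  forall x, supported C x -> nonzero x -> zform e x x < 0.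

Definition parabolic_component (T : finType) (e : rel T) (C : {set T}) : Prop :=
  [/\ component e C,
      (forall x, supported C x -> zform e x x <= 0)
    & exists x, [/\ supported C x, nonzero x &
                   forall y, supported C y -> zform e x y = 0]].

Definition degree (T : finType) (e : rel T) (C : {set T}) (d : int) : Prop :=
  exists k : T -> int,
    [/\ supported C k,
        (forall v, v \in C -> 0 < k v),
        (forall x, supported C x ->
           ((forall y, supported C y -> zform e x y = 0) <->
            exists m : int, forall v, x v = m * k v))
      & d = \sum_(v in C) k v].

Definition in_ds (T : finType) (e : rel T) (S : {set T}) (n : int) : Prop :=
  exists r : T -> int,
    [/\ supported S r, (forall v, 0 <= r v), zform e r r = -2
      & \sum_(v in S) r v = n].

(* Γ saturated: the map from vertices to F_h(Γ) is a graph isomorphism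
   onto the set of lines {w : w^2 = -2, w.h = 1}. *)
Definition saturated (D : nat) (T : finType) (e : rel T) : Prop :=
  [/\ (forall u v : T, feq D e (vertex u) (vertex v) -> u = v),
      (forall u v : T, (bform D e (vertex u) (vertex v) == 1) = e u v)
    & (forall w : lvec T, bform D e w w = -2 -> bform D e w (hvec T) = 1 ->
         exists v : T, feq D e w (vertex v))].

(* Main.v *)
Require Import Defs.
From mathcomp Require Import all_boot all_order all_algebra.
Set Implicit Arguments. Unset Strict Implicit. Unset Printing Implicit Defensive.
Import Order.TTheory GRing.Theory Num.Theory.
Local Open Scope ring_scope.

Section Aux.
Variables (T : finType) (e : rel T).

Lemma zform_subl (a b y : T -> int) :
  zform e (fun u => a u - b u) y = zform e a y - zform e b y.
Proof.
rewrite /zform -sumrB; apply: eq_bigr => u _; rewrite -sumrB.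
by apply: eq_bigr => v _; rewrite !mulrBl.
Qed.

Lemma zform_addl (a b y : T -> int) :
  zform e (fun u => a u + b u) y = zform e a y + zform e b y.
Proof.
rewrite /zform -big_split; apply: eq_bigr => u _; rewrite -big_split.
by apply: eq_bigr => v _; rewrite !mulrDl.
Qed.

Lemma zform_subr (a b y : T -> int) :
  zform e y (fun u => a u - b u) = zform e y a - zform e y b.
Proof.
rewrite /zform -sumrB; apply: eq_bigr => u _; rewrite -sumrB.
by apply: eq_bigr => v _; rewrite mulrBr !mulrBl.
Qed.

Lemma zform_sym (a b : T -> int) : symmetric e -> zform e a b = zform e b a.
Proof.
move=> se; rewrite /zform exchange_big; apply: eq_bigr => u _.
apply: eq_bigr => v _; rewrite /gram eq_sym se.
by rewrite [a v * _]mulrC.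
Qed.

Lemma zform_x0 (a : T -> int) : zform e a (fun _ => 0) = 0.
Proof. by rewrite /zform big1 // => u _; rewrite big1 // => v _; rewrite mulr0 mul0r. Qed.

Lemma bform00 D (a b : T -> int) : bform D e (a, 0) (b, 0) = zform e a b.
Proof. by rewrite /bform /= !mul0r !addr0. Qed.

Lemma bform0h D (a : T -> int) : bform D e (a, 0) (hvec T) = \sum_v a v.
Proof. by rewrite /bform /= zform_x0 !mul0r mul1r !addr0 add0r. Qed.

Lemma sum_supp (S : {set T}) (x : T -> int) :
  supported S x -> \sum_v x v = \sum_(v in S) x v.
Proof.
move=> sx; rewrite [RHS]big_mkcond; apply: eq_bigr => v _.
by case: ifP => // /negbT /sx.
Qed.

Lemma comp_sep (S : {set T}) u v : symmetric e -> component e S ->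
  u \notin S -> v \in S -> gram e u v = 0.
Proof.
move=> se [s ->] uS vS; rewrite /gram.
case: eqP => [uv|_]; first by subst; rewrite vS in uS.
case euv: (e u v) => //.
move: uS; rewrite inE; move: vS; rewrite inE => cv.
by rewrite (connect_trans cv) // connect1 // se.
Qed.

Lemma zform_out (S : {set T}) (a b : T -> int) : symmetric e -> component e S ->
  (forall u, a u != 0 -> u \notin S) -> supported S b -> zform e a b = 0.
Proof.
move=> se cS ha hb; rewrite /zform big1 // => u _; rewrite big1 // => v _.
case: (eqVneq (a u) 0) => [->|/ha uS]; first by rewrite !mul0r.
case vS: (v \in S); first by rewrite (comp_sep se cS uS vS) mulr0.
by rewrite hb ?vS // mulr0 mul0r.
Qed.

End Aux.

Theorem corollary3p4 (D : nat) (T : finType) (e : rel T) :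
  (2 <= D)%N -> symmetric e -> irreflexive e ->
  admissible D e -> parabolic e ->
  forall (C S : {set T}) (d : int),
    parabolic_component e C -> degree e C d -> elliptic_component e S ->
    ~ in_ds e S d /\ (saturated D e -> ~ in_ds e S (d - 1)).
Proof.
move=> _ se _ [_ adm2 _] _ C S d [cC _ [x0 [sx0 [v0 nz0] _]]] [k [sk kpos kker ->]] [cS ell].
have kk : forall y, supported C y -> zform e k y = 0.
  by apply/(kker k sk); exists 1 => v; rewrite mul1r.
have disj : forall u, u \in C -> u \notin S.
  move=> u uC; apply/negP => uS.
  have skS : supported S k.
    move=> x xS; case xC: (x \in C); last by rewrite sk ?xC.
    move: cC cS uC uS xS xC => [c ->] [s ->]; rewrite !inE => cu su /negP xS cx.
    exfalso; apply: xS.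
    apply: (connect_trans su); rewrite (sym_connect_sym se) in cu.
    exact: connect_trans cu cx.
  have : zform e k k < 0.
    apply: ell => //; exists u; by rewrite gt_eqF // kpos.
  by rewrite kk // ltxx.
have kout : forall u, k u != 0 -> u \notin S.
  move=> u; case uC: (u \in C); first by move=> _; apply: disj.
  by rewrite sk ?uC ?eqxx.
have kr : forall r, supported S r -> zform e k r = 0.
  by move=> r sr; apply: (zform_out se cS kout sr).
have rk : forall r, supported S r -> zform e r k = 0.
  by move=> r sr; rewrite zform_sym // kr.
have sumk : \sum_v k v = \sum_(v in C) k v by apply: sum_supp.
have w2 : forall r, supported S r -> zform e r r = -2 ->
   bform D e ((fun u => k u - r u), 0) ((fun u => k u - r u), 0) = -2.
  move=> r sr rr; rewrite bform00 zform_subl !zform_subr kk // kr // rk // rr.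
  by rewrite !subr0 sub0r opprK.
have wh : forall r, supported S r ->
   bform D e ((fun u => k u - r u), 0) (hvec T) = \sum_(v in C) k v - \sum_(v in S) r v.
  by move=> r sr; rewrite bform0h sumrB sumk (sum_supp sr).
split.
  move=> [r [sr rpos rr rsum]].
  apply: (adm2 ((fun u => k u - r u), 0)); split; first exact: w2.
  by rewrite wh // rsum subrr.
move=> [_ _ sat] [r [sr rpos rr rsum]].
have wh1 : bform D e ((fun u => k u - r u), 0) (hvec T) = 1.
  by rewrite wh // rsum opprB addrC subrK.
have [v hv] := sat _ (w2 r sr rr) wh1.
pose dl := fun u : T => ((u == v)%:R : int).
have key : forall y, supported S y -> zform e r y + zform e dl y = 0.
  move=> y sy; have := hv (y, 0); rewrite /lsub /= subrr bform00.
  rewrite zform_subl zform_subl kr // sub0r -opprD => /eqP.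
  by rewrite oppr_eq0 => /eqP.
have vS : v \in S.
  apply/negP => vS.
  have : zform e dl r = 0.
    apply: (zform_out se cS _ sr) => u; rewrite /dl.
    by case: (eqVneq u v) => [->|] // _; apply/negP.
  move=> dr; have := key r sr.
  by rewrite dr rr addr0.
pose x := fun u => dl u + r u.
have sx : supported S x.
  move=> u uS; rewrite /x /dl sr //; case: eqP => [eu|]; last by rewrite addr0.
  by subst; rewrite vS in uS.
have : zform e x x < 0.
  apply: ell => //; exists v; rewrite /x /dl eqxx gt_eqF //.
  by rewrite ltr_pwDl // rpos.
by rewrite {1}/x zform_addl addrC key // ltxx.
Qed.
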